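(* Let $T$ be a tree on $n\ge3$ vertices, let $M$ be its order-$4$ Steiner distance hypermatrix, and let $A=\frac{2}{n}J_n-I_n$. Define the order-$4$ multilinear forms $C_1(\mathbf{x}_1,\mathbf{x}_2,\mathbf{x}_3,\mathbf{x}_4)=M(\mathbf{x}_1,\mathbf{x}_2,\mathbf{x}_3,A\mathbf{x}_4)$ and $C_3(\mathbf{x}_1,\mathbf{x}_2,\mathbf{x}_3,\mathbf{x}_4)=M(\mathbf{x}_1,A\mathbf{x}_2,A\mathbf{x}_3,A\mathbf{x}_4)$. Then $C_1+C_3$ is positive definite: $(C_1+C_3)(\mathbf{v},\mathbf{v},\mathbf{v},\mathbf{v})>0$ for every nonzero $\mathbf{v}\in\mathbb{R}^n$.
   Context: $T$ is a tree with vertex set $\{1,\dots,n\}$. For $U\subseteq V(T)$, the Steiner distance $S(U)$ is the minimum number of edges of a connected subgraph of $T$ whose vertex set contains $U$. The order-$4$ Steiner distance hypermatrix $M$ has entries $M_{(i_1,\dots,i_4)}=S(\{i_1,\dots,i_4\})$, and $M(\mathbf{x}_1,\dots,\mathbf{x}_4)=\sum_{\mathbf{i}\in V(T)^4}M_{\mathbf{i}}\prod_{j=1}^4 x_{j i_j}$. $J_n$ is the $n\times n$ all-ones matrix and $I_n$ the identity matrix. *)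

(* Defs.v *)
From HB Require Import structures.
From mathcomp Require Import all_boot all_order all_algebra.
Set Implicit Arguments. Unset Strict Implicit. Unset Printing Implicit Defensive.
Import Order.TTheory GRing.Theory Num.Theory.

Definition simple_graph n (e : rel 'I_n) : Prop :=
  symmetric e /\ irreflexive e.

Definition connected_graph n (e : rel 'I_n) : Prop :=
  forall x y : 'I_n, connect e x y.

Definition acyclic_graph n (e : rel 'I_n) : Prop :=
  forall c : seq 'I_n, 3 <= size c -> ~~ ucycleb e c.

Definition is_tree n (e : rel 'I_n) : Prop :=
  [/\ simple_graph e, connected_graph e & acyclic_graph e].

Definition is_subgraph n (e : rel 'I_n) (W : {set 'I_n}) (F : {set {set 'I_n}}) : bool :=
  [forall f in F, (f \subset W) &&
     [exists x, exists y, (x != y) && e x y && (f == [set x; y])]].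

Definition subgraph_adj n (W : {set 'I_n}) (F : {set {set 'I_n}}) : rel 'I_n :=
  fun x y => [&& x \in W, y \in W & [set x; y] \in F].

Definition subgraph_connected n (W : {set 'I_n}) (F : {set {set 'I_n}}) : bool :=
  [forall x in W, forall y in W, connect (subgraph_adj W F) x y].

Definition steiner_feasible n (e : rel 'I_n) (U W : {set 'I_n}) (F : {set {set 'I_n}}) : bool :=
  [&& is_subgraph e W F, subgraph_connected W F & U \subset W].

(* The default value n of the minimum is never
   attained for a connected graph (a spanning tree has n-1 < n edges). *)
Definition steiner n (e : rel 'I_n) (U : {set 'I_n}) : nat :=
  \big[minn/n]_(W : {set 'I_n})
    \big[minn/n]_(F : {set {set 'I_n}} | steiner_feasible e U W F) #|F|.

Local Open Scope ring_scope.

Definition steiner_form (R : ringType) n (e : rel 'I_n)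
    (x1 x2 x3 x4 : 'cV[R]_n) : R :=
  \sum_(i1 < n) \sum_(i2 < n) \sum_(i3 < n) \sum_(i4 < n)
    (steiner e [set i1; i2; i3; i4])%:R
      * x1 i1 0 * x2 i2 0 * x3 i3 0 * x4 i4 0.

Definition matA (R : fieldType) n : 'M[R]_n :=
  (2 / n%:R) *: const_mx 1 - 1%:M.

Definition C1 (R : fieldType) n (e : rel 'I_n) (x1 x2 x3 x4 : 'cV[R]_n) : R :=
  steiner_form e x1 x2 x3 (matA R n *m x4).

Definition C3 (R : fieldType) n (e : rel 'I_n) (x1 x2 x3 x4 : 'cV[R]_n) : R :=
  steiner_form e x1 (matA R n *m x2) (matA R n *m x3) (matA R n *m x4).

(* Main.v *)
Require Import Defs.
From HB Require Import structures.
From mathcomp Require Import all_boot all_order all_algebra.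
From mathcomp Require Import zify ring lra.
Import Order.TTheory GRing.Theory Num.Theory.
Set Implicit Arguments. Unset Strict Implicit. Unset Printing Implicit Defensive.
Lemma closure_conn (T : finType) (r : rel T) (S : pred T) a b :
  (forall u w, S u -> r u w -> S w) -> S a -> connect r a b -> S b.
Proof.
move=> cl Sa /connectP[p pp ->]; elim: p a Sa pp => //= c p IH a Sa /andP[rac pp].
exact: IH (cl _ _ Sa rac) pp.
Qed.

Lemma bigmin_le_seq (I : eqType) (r : seq I) (P : pred I) (F : I -> nat) x i :
  i \in r -> P i -> (\big[minn/x]_(j <- r | P j) F j <= F i)%N.
Proof.
elim: r => //= a r IH; rewrite inE big_cons => /orP[/eqP<-|ir] Pi.
  by rewrite Pi geq_minl.
case: (P a); last exact: IH.
by apply: leq_trans (geq_minr _ _) (IH ir Pi).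
Qed.

Lemma bigmin_le (I : finType) (P : pred I) (F : I -> nat) x i :
  P i -> (\big[minn/x]_(j | P j) F j <= F i)%N.
Proof. by apply: bigmin_le_seq; rewrite mem_index_enum. Qed.

Section Tree.
Variable n : nat.
Variable e : rel 'I_n.
Hypothesis tr : is_tree e.

Lemma e_sym : symmetric e. Proof. by case: tr => [[]]. Qed.
Lemma e_irr : irreflexive e. Proof. by case: tr => [[]]. Qed.
Lemma e_conn x y : connect e x y. Proof. by case: tr => _ /(_ x y). Qed.
Lemma e_acyc c : (3 <= size c)%N -> ~~ ucycleb e c. Proof. by case: tr => _ _ /(_ c). Qed.

Definition edel (x y : 'I_n) : rel 'I_n :=
  fun a b => e a b && ([set a; b] != [set x; y]).

Lemma edel_sym x y : symmetric (edel x y).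
Proof. by move=> a b; rewrite /edel e_sym [[set b; a]]setUC. Qed.

Lemma edel_swap x y : edel y x =2 edel x y.
Proof. by move=> a b; rewrite /edel [[set y; x]]setUC. Qed.

Lemma conn_sym (r : rel 'I_n) : symmetric r -> symmetric (connect r).
Proof. move=> s x y; exact: (sym_connect_sym s). Qed.

Definition side (x y : 'I_n) : {set 'I_n} := [set w | connect (edel x y) x w].

Lemma side_x x y : x \in side x y.
Proof. by rewrite inE connect0. Qed.

Lemma bridge x y : e x y -> y \notin side x y.
Proof.
move=> exy; rewrite inE; apply/negP => /connectP[p pp lp].
move: lp; case: (shortenP pp) => p' pp' up' _ lp'.
have ep' : path e x p' by apply: sub_path pp' => a b /andP[].
have xy : x != y by apply/eqP => exy'; rewrite exy' e_irr in exy.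
case: p' pp' up' lp' ep' => [|a [|b q]] /=.
- by move=> _ _ lq; move: xy; rewrite lq eqxx.
- by move=> /andP[/andP[_ +] _] _ lq; rewrite -lq eqxx.
move=> _ uq lq ep.
apply: (negP (e_acyc (c := [:: x, a, b & q]) _)) => //.
rewrite /ucycleb /= uq andbT.
rewrite /cycle /=. rewrite rcons_path.
case/andP: ep => -> /andP[-> ->] /=.
by rewrite -lq /= e_sym.
Qed.

Lemma cross x y a b : a \in side x y -> e a b -> [set a; b] != [set x; y] ->
  b \in side x y.
Proof.
rewrite !inE => xa eab ne; apply: connect_trans xa _; apply: connect1.
by rewrite /edel eab ne.
Qed.

Lemma side_swapE x y : side y x = [set w | connect (edel x y) y w].
Proof. by apply/setP => w; rewrite !inE (eq_connect (edel_swap x y)). Qed.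

Lemma in_set2_eq (a b x y : 'I_n) : [set a; b] = [set x; y] -> b \in [set x; y].
Proof. by move=> <-; rewrite !inE eqxx orbT. Qed.

Lemma set2_mem (a b x y : 'I_n) : [set a; b] = [set x; y] ->
  (x == a) || (x == b).
Proof. by move=> h; rewrite -in_set2 h in_set2 eqxx. Qed.

Lemma set2_memr (a b x y : 'I_n) : [set a; b] = [set x; y] ->
  (y == a) || (y == b).
Proof. by move=> h; rewrite -in_set2 h in_set2 eqxx orbT. Qed.

Lemma side_compl x y : e x y -> side y x = ~: side x y.
Proof.
move=> exy; apply/setP => w; rewrite in_setC.
have cover : (w \in side x y) || (w \in side y x).
  apply: (closure_conn (S := fun w => (w \in side x y) || (w \in side y x)))
     (e_conn x w); last by rewrite side_x.
  move=> u u' /orP[ux|uy] euu'.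
  - case: (eqVneq [set u; u'] [set x; y]) => [/in_set2_eq|ne].
      by rewrite in_set2 => /orP[]/eqP-> /=; apply/orP; [left|right]; apply: side_x.
    by rewrite (cross ux euu' ne).
  - case: (eqVneq [set u; u'] [set y; x]) => [/in_set2_eq|ne].
      by rewrite in_set2 => /orP[]/eqP-> /=; apply/orP; [right|left]; apply: side_x.
    by rewrite (cross uy euu' ne) orbT.
case: (boolP (w \in side x y)) => wx /=; last by move: cover; rewrite (negPf wx).
apply/negP => wy; apply: (negP (bridge exy)).
move: wx wy; rewrite side_swapE !inE => xw yw.
apply: connect_trans xw _; rewrite (conn_sym (edel_sym y x)); exact: yw.
Qed.

Lemma side_sub z y y' : e z y -> e z y' -> y != y' -> side y' z \subset side z y.
Proof.
move=> ezy ezy' ne; apply/subsetP => w; rewrite [w \in side y' z]inE => cw.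
have nz u : u \in side y' z -> u != z.
  by move=> uin; apply/eqP => uz; move: uin; rewrite uz; apply/negP/bridge; rewrite e_sym.
have : (w \in side z y) && (w \in side y' z); last by case/andP.
apply: (closure_conn (S := fun w => (w \in side z y) && (w \in side y' z))) cw.
  move=> u u' /andP[uzy uyz] ed.
  have u'yz : u' \in side y' z by move: uyz; rewrite !inE => c; apply: connect_trans c (connect1 ed).
  rewrite u'yz andbT; apply: (cross uzy); first by case/andP: ed.
  apply/eqP => /set2_mem /orP[]/eqP zu.
    by move: (nz u uyz); rewrite zu eqxx.
  by move: (nz u' u'yz); rewrite zu eqxx.
apply/andP; split; last exact: side_x.
apply: (cross (side_x z y) ezy').
apply/eqP => /set2_memr /orP[]/eqP h.
  by move: ezy; rewrite h e_irr.
by move: ne; rewrite h eqxx.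
Qed.

Lemma side_disj z y y' w : e z y -> e z y' -> y != y' ->
  w \in side y z -> w \in side y' z -> False.
Proof.
move=> ezy ezy' ne wy wy'.
have := subsetP (side_sub ezy ezy' ne) _ wy'.
by rewrite -[side z y]setCK -side_compl // inE wy.
Qed.

Lemma side_cover z w : w != z -> exists y, e z y && (w \in side y z).
Proof.
move=> wz.
have : (w == z) || [exists y, e z y && (w \in side y z)].
  apply: (closure_conn (S := fun w => (w == z) || [exists y, e z y && (w \in side y z)])) (e_conn z w); last by rewrite eqxx.
  move=> u u' /orP[/eqP->|/existsP[y /andP[ezy uy]]] euu'.
    by apply/orP; right; apply/existsP; exists u'; rewrite euu' side_x.
  case: (eqVneq [set u; u'] [set y; z]) => [/in_set2_eq|ne].
    rewrite in_set2 => /orP[]/eqP->; first by apply/orP; right; apply/existsP; exists y; rewrite ezy side_x.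
    by rewrite eqxx.
  by apply/orP; right; apply/existsP; exists y; rewrite ezy (cross uy euu' ne).
by rewrite (negPf wz) => /existsP[y h]; exists y.
Qed.

Definition edgeb (k : 'I_n * 'I_n) := (k.1 < k.2)%N && e k.1 k.2.

Definition p2s (k : 'I_n * 'I_n) : {set 'I_n} := [set k.1; k.2].

Lemma p2s_inj : {in [pred k | edgeb k] &, injective p2s}.
Proof.
move=> [x y] [x' y']; rewrite !inE /edgeb /p2s /= => /andP[lt _] /andP[lt' _] h.
have := set2_mem h; have := set2_memr h.
rewrite -!val_eqE /=.
move=> /orP[]/eqP h1 /orP[]/eqP h2; apply/eqP; rewrite xpair_eqE -!val_eqE /=;
  apply/andP; split; apply/eqP; lia.
Qed.

Lemma e_set2 a b c d : [set a; b] = [set c; d] -> e c d -> e a b.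
Proof.
move=> h ecd; have cd : c != d by apply/eqP => cd; rewrite cd e_irr in ecd.
have := set2_mem h; have := set2_memr h.
move=> /orP[]/eqP h1 /orP[]/eqP h2.
- by move: cd; rewrite h1 h2 eqxx.
- by rewrite h1 h2 e_sym in ecd.
- by rewrite h1 h2 in ecd.
- by move: cd; rewrite h1 h2 eqxx.
Qed.

Lemma edge_of a b : e a b -> exists2 k, edgeb k & p2s k = [set a; b].
Proof.
move=> eab; have ab : a != b by apply/eqP => ab; rewrite ab e_irr in eab.
case: (ltngtP a b) => h.
- by exists (a, b); rewrite /edgeb /= ?h ?eab.
- by exists (b, a); [rewrite /edgeb /= h e_sym | rewrite /p2s /= setUC].
- by exfalso; move/eqP: ab; apply; apply: val_inj.
Qed.

Definition sepb (U : {set 'I_n}) (k : 'I_n * 'I_n) :=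
  (U :&: side k.1 k.2 != set0) && (U :&: ~: side k.1 k.2 != set0).

Definition cnt U := #|[set k | edgeb k && sepb U k]|.

Lemma subg_e W F a b : is_subgraph e W F -> [set a; b] \in F -> e a b.
Proof.
move=> /forall_inP /(_ _ _) h /h /andP[_ /existsP[c /existsP[d /andP[/andP[_ ecd] /eqP hh]]]].
exact: e_set2 hh ecd.
Qed.

Lemma lower U W F k : steiner_feasible e U W F -> edgeb k -> sepb U k ->
  p2s k \in F.
Proof.
case: k => x y /and3P[sg con UW] /andP[_ exy] /andP[/set0Pn[u] + /set0Pn[r]].
rewrite !inE /= => /andP[uU ux] /andP[rU rx].
apply/negPn/negP => nF; move/negP: rx; apply.
have uW := subsetP UW _ uU; have rW := subsetP UW _ rU.
have := (forall_inP (forall_inP con u uW) r rW).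
move=> /(connect_sub (e' := edel x y)) cr.
apply: connect_trans ux _; apply: cr.
move=> a b /and3P[_ _ abF]; apply: connect1; rewrite /edel (subg_e sg abF).
by apply/eqP => h; move: abF; rewrite h => /(negP nF).
Qed.

Lemma cnt_le_feas U W F : steiner_feasible e U W F -> (cnt U <= #|F|)%N.
Proof.
move=> fe; rewrite /cnt -(card_in_imset (f := p2s)); last first.
  by move=> k k' /[!inE] /andP[ek _] /andP[ek' _]; apply: p2s_inj.
apply: subset_leq_card; apply/subsetP => f /imsetP[k /[!inE] /andP[ek sk] ->].
exact: lower fe ek sk.
Qed.

Lemma restrict U W F (S : {set 'I_n}) p q : steiner_feasible e U W F ->
  U \subset S -> p \in S -> q \notin S -> [set p; q] \in F ->
  (forall a b, a \in S -> b \notin S -> e a b -> [set a; b] = [set p; q]) ->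
  steiner_feasible e U (W :&: S) [set g in F | g \subset S] /\
  (#|[set g in F | g \subset S]| < #|F|)%N.
Proof.
move=> /and3P[sg con UW] US pS qS pqF crs.
have crs2 a b : a \in S -> b \notin S -> e a b -> a = p /\ b = q.
  move=> aS bS eab; have h := crs a b aS bS eab; split.
    have /orP[/eqP->//|/eqP pb] := set2_mem h.
    by move: bS; rewrite -pb pS.
  have /orP[/eqP qa|/eqP->//] := set2_memr h.
  by move: qS; rewrite qa aS.
split; last first.
  apply: proper_card; apply/properP; split.
    by apply/subsetP => g; rewrite inE => /andP[].
  exists [set p; q] => //; rewrite inE pqF /=.
  by apply/negP => /subsetP /(_ q); rewrite !inE eqxx orbT => /(_ isT); apply/negP.
apply/and3P; split; last by rewrite subsetI UW US.
  apply/forall_inP => g; rewrite inE => /andP[gF gS].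
  have /andP[gW ->] := forall_inP sg g gF.
  by rewrite subsetI gW gS.
apply/forall_inP => a /[!inE] /andP[aW aS]; apply/forall_inP => b /[!inE] /andP[bW bS].
set adj' := subgraph_adj _ _.
have CS w : connect adj' a w -> w \in S.
  apply: (closure_conn (S := fun w => w \in S)) => // u w' _.
  by rewrite /adj' /subgraph_adj !inE => /and3P[_ /andP[]].
have adjS u w : u \in W -> w \in W -> u \in S -> w \in S -> [set u; w] \in F -> adj' u w.
  move=> uW wW uS wS uwF; rewrite /adj' /subgraph_adj !inE uW wW uS wS uwF /=.
  by apply/subsetP => z; rewrite !inE => /orP[]/eqP->.
have : connect adj' a b || (connect adj' a p && (b \notin S)).
  apply: (closure_conn (S := fun w => connect adj' a w || (connect adj' a p && (w \notin S))))
     (forall_inP (forall_inP con a aW) b bW); last by rewrite connect0.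
  move=> u w /orP[Cu|/andP[Cp uS]] /and3P[uW wW uwF]; have euw := subg_e sg uwF.
  - have uS := CS _ Cu; case: (boolP (w \in S)) => wS.
      by rewrite (connect_trans Cu (connect1 (adjS _ _ uW wW uS wS uwF))).
    by have [up _] := crs2 _ _ uS wS euw; rewrite -up Cu orbT.
  - case: (boolP (w \in S)) => wS; last by rewrite Cp orbT.
    by have [-> _] := crs2 _ _ wS uS (etrans (e_sym w u) euw); rewrite Cp.
by rewrite bS andbF orbF.
Qed.

Definition sepset U := p2s @: [set k | edgeb k && sepb U k].

Lemma upper U m W F : steiner_feasible e U W F -> (#|F| <= m)%N ->
  exists W' F', steiner_feasible e U W' F' && (F' \subset sepset U).
Proof.
elim: m W F => [|m IH] W F fe.
  rewrite leqn0 cards_eq0 => /eqP F0; exists W, F; rewrite fe /= F0.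
  by apply/subsetP => g; rewrite inE.
move=> cF; case: (boolP (F \subset sepset U)) => sub; first by exists W, F; rewrite fe.
case/subsetPn: sub => f fF fns.
have := fe => /and3P[sg _ _].
have /andP[_ /existsP[c /existsP[d /andP[/andP[_ ecd] /eqP fcd]]]] := forall_inP sg f fF.
have [[x y] ek pk] := edge_of ecd.
have exy : e x y by case/andP: ek.
have nsep : ~~ sepb U (x, y).
  apply/negP => sp; move/negP: fns; apply; rewrite fcd -pk; apply: imset_f.
  by rewrite inE ek sp.
have red : forall W' F', steiner_feasible e U W' F' /\ (#|F'| < #|F|)%N ->
    exists W' F', steiner_feasible e U W' F' && (F' \subset sepset U).
  by move=> W' F' [fe' lt]; apply: (IH W' F' fe'); rewrite -ltnS (leq_trans lt cF).
have pF : [set x; y] \in F by move: fF; rewrite fcd -pk.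
move: nsep; rewrite /sepb /= negb_and !negbK => /orP[U0|U0].
-
  apply: (red _ _ (restrict (S := ~: side x y) (p := y) (q := x) fe _ _ _ _ _)).
  + by rewrite -disjoints_subset -setI_eq0.
  + by rewrite inE bridge.
  + by rewrite inE negbK side_x.
  + by rewrite setUC.
  + move=> a b; rewrite !in_setC negbK => aS bS eab.
    rewrite [[set a; b]]setUC [[set y; x]]setUC.
    apply/eqP; apply/negPn/negP => ne; apply: (negP aS).
    by apply: (cross bS _ ne); rewrite e_sym.
- apply: (red _ _ (restrict (S := side x y) (p := x) (q := y) fe _ _ _ _ _)).
  + by rewrite -[side x y]setCK -disjoints_subset -setI_eq0.
  + exact: side_x.
  + exact: bridge.
  + by [].
  + move=> a b aS bS eab; apply/eqP; apply/negPn/negP => ne; apply: (negP bS).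
    exact: cross aS eab ne.
Qed.

Definition gmap (r : 'I_n) (k : 'I_n * 'I_n) := if r \in side k.1 k.2 then k.2 else k.1.

Lemma gmap_spec r k : edgeb k -> exists o,
  [/\ e (gmap r k) o, r \in side o (gmap r k) & (k == (gmap r k, o)) || (k == (o, gmap r k))]
  /\ gmap r k != r.
Proof.
case: k => x y /andP[_ /= exy]; rewrite /gmap /=.
case: (boolP (r \in side x y)) => rs.
  exists x; split; first by split; [rewrite e_sym | | rewrite eqxx orbT].
  by apply/eqP => yr; move: rs; rewrite -yr; apply/negP; apply: bridge.
exists y; split; first by split; rewrite ?eqxx // side_compl // inE.
by apply/eqP => xr; move: rs; rewrite -xr side_x.
Qed.

Lemma edges_lt (r : 'I_n) : (#|[set k | edgeb k]| < n)%N.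
Proof.
rewrite -(card_in_imset (f := gmap r)).
  have : (#|gmap r @: [set k | edgeb k]| <= #|[set~ r]|)%N.
    apply: subset_leq_card; apply/subsetP => z /imsetP[k /[!inE] ek ->].
    by have [_ [_ ->]] := gmap_spec r ek.
  rewrite cardsC1 card_ord => h; apply: (leq_ltn_trans h).
  by rewrite ltn_predL (leq_ltn_trans (leq0n r) (ltn_ord r)).
move=> k k' /[!inE] ek ek' eq.
have [o [[ezo ro ko] _]] := gmap_spec r ek.
have [o' [[ezo' ro' ko'] _]] := gmap_spec r ek'.
rewrite -eq in ezo' ro' ko'.
have oo : o = o'.
  apply/eqP; apply/negPn/negP => ne.
  exact: side_disj ezo ezo' ne ro ro'.
subst o'; move: ek ek' ko ko'; clear eq ro ro' ezo ezo'.
move: (gmap r k) => z ek ek' /orP[]/eqP kE /orP[]/eqP kE'; rewrite kE kE' //;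
  move: ek ek'; rewrite kE kE' /edgeb /= => /andP[h1 _] /andP[h2 _];
  by move: (ltn_trans h1 h2); rewrite ltnn.
Qed.

Definition Eall := p2s @: [set k | edgeb k].

Lemma feas_all U : steiner_feasible e U setT Eall.
Proof.
apply/and3P; split; last exact: subsetT.
  apply/forall_inP => g /imsetP[[x y] /[!inE] /andP[lt exy] ->].
  rewrite subsetT /=; apply/existsP; exists x; apply/existsP; exists y.
  by rewrite exy eqxx andbT andbT; apply/eqP => h; move: lt; rewrite h ltnn.
apply/forall_inP => a _; apply/forall_inP => b _.
apply: (connect_sub _ (e_conn a b)) => u w euw; apply: connect1.
rewrite /subgraph_adj !inE /=; have [k ek pk] := edge_of euw.
by rewrite -pk imset_f // inE.
Qed.

Lemma steiner_cnt (r : 'I_n) U : steiner e U = cnt U.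
Proof.
apply/eqP; rewrite eqn_leq; apply/andP; split.
  have [W' [F' /andP[fe' sub]]] := upper (m := #|Eall|) (feas_all U) (leqnn _).
  apply: (@leq_trans #|F'|); last first.
    apply: (leq_trans (subset_leq_card sub)); exact: leq_imset_card.
  rewrite /steiner.
  apply: leq_trans (bigmin_le (fun W => \big[minn/n]_(F | steiner_feasible e U W F) #|F|) n (i := W') (P := xpredT) isT) _.
  exact: (bigmin_le _ _ fe').

have cn : (cnt U <= n)%N.
  apply: ltnW; apply: leq_ltn_trans (edges_lt r).
  by apply: subset_leq_card; apply/subsetP => k; rewrite !inE => /andP[].
rewrite /steiner; apply: (big_ind (fun m : nat => (cnt U <= m)%N)) => //.
  by move=> a b ha hb; rewrite leq_min ha hb.
move=> W _; apply: (big_ind (fun m : nat => (cnt U <= m)%N)) => //.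
  by move=> a b ha hb; rewrite leq_min ha hb.
by move=> F fe; exact: (cnt_le_feas fe).
Qed.
End Tree.

Local Open Scope ring_scope.
Lemma ind4 (R : comRingType) (b1 b2 b3 b4 : bool) :
  (([|| b1, b2, b3 | b4]) && ([|| ~~ b1, ~~ b2, ~~ b3 | ~~ b4]))%:R =
  1 - b1%:R * b2%:R * b3%:R * b4%:R - (~~ b1)%:R * (~~ b2)%:R * (~~ b3)%:R * (~~ b4)%:R :> R.
Proof. by case: b1; case: b2; case: b3; case: b4; rewrite /= ?mul1r ?mul0r ?mulr0 ?subr0 ?sub0r ?subrr //. Qed.

Lemma fact4 (R : comRingType) n (f1 f2 f3 f4 : 'I_n -> R) :
  \sum_(i1 < n) \sum_(i2 < n) \sum_(i3 < n) \sum_(i4 < n) (f1 i1 * f2 i2 * f3 i3 * f4 i4)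
  = (\sum_i f1 i) * (\sum_i f2 i) * (\sum_i f3 i) * (\sum_i f4 i).
Proof.
have h (g : 'I_n -> R) (c : R) : \sum_i c * g i = c * \sum_i g i by rewrite big_distrr.
have h' (g : 'I_n -> R) (c : R) : \sum_i g i * c = (\sum_i g i) * c by rewrite big_distrl.
under eq_bigr => i1 _ do under eq_bigr => i2 _ do under eq_bigr => i3 _ do rewrite h.
under eq_bigr => i1 _ do under eq_bigr => i2 _ do rewrite h' h.
under eq_bigr => i1 _ do rewrite h' h' h.
by rewrite h' h' h'.
Qed.


Section Form.
Variable R : comRingType.
Variable n : nat.
Variable e : rel 'I_n.
Hypothesis tr : is_tree e.

Definition tot (x : 'cV[R]_n) := \sum_i x i 0.
Definition sg (L : {set 'I_n}) (x : 'cV[R]_n) := \sum_(i in L) x i 0.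

Lemma sum_ind (L : {set 'I_n}) (x : 'cV[R]_n) :
  \sum_i (i \in L)%:R * x i 0 = sg L x.
Proof.
by rewrite /sg [RHS]big_mkcond /=; apply: eq_bigr => i _; case: (i \in L); rewrite ?mul1r ?mul0r.
Qed.

Lemma cnt_sum U : (cnt e U)%:R = \sum_(k | edgeb e k) ((sepb e U k)%:R : R).
Proof.
rewrite /cnt -sum1_card natr_sum.
rewrite (eq_bigl (fun k => edgeb e k && sepb e U k)); last by move=> k; rewrite inE.
rewrite big_mkcondr /=; apply: eq_bigr => k _; by case: (sepb e U k).
Qed.

Lemma meet4 (L : {set 'I_n}) i1 i2 i3 i4 :
  ([set i1; i2; i3; i4] :&: L != set0) = [|| i1 \in L, i2 \in L, i3 \in L | i4 \in L].
Proof.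
apply/set0Pn/idP => [[x /setIP[xU xL]]|].
  by move: xU; rewrite !inE -!orbA; case/or4P => /eqP xi; rewrite -xi xL ?orbT.
by case/or4P => h; [exists i1|exists i2|exists i3|exists i4]; rewrite inE h !inE eqxx ?orbT.
Qed.

Lemma sep_ind i1 i2 i3 i4 k :
  ((sepb e [set i1; i2; i3; i4] k)%:R : R) =
  1 - (i1 \in side e k.1 k.2)%:R * (i2 \in side e k.1 k.2)%:R * (i3 \in side e k.1 k.2)%:R * (i4 \in side e k.1 k.2)%:R
    - (i1 \in ~: side e k.1 k.2)%:R * (i2 \in ~: side e k.1 k.2)%:R * (i3 \in ~: side e k.1 k.2)%:R * (i4 \in ~: side e k.1 k.2)%:R.
Proof. by rewrite /sepb !meet4 !in_setC ind4. Qed.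


Lemma alg8 (a1 a2 a3 a4 b1 b2 b3 b4 y1 y2 y3 y4 : R) :
  (1 - a1 * a2 * a3 * a4 - b1 * b2 * b3 * b4) * y1 * y2 * y3 * y4 =
  y1 * y2 * y3 * y4 - (a1 * y1) * (a2 * y2) * (a3 * y3) * (a4 * y4)
   - (b1 * y1) * (b2 * y2) * (b3 * y3) * (b4 * y4).
Proof. ring. Qed.

Lemma form_edges x1 x2 x3 x4 : steiner_form e x1 x2 x3 x4 =
  \sum_(k | edgeb e k) (tot x1 * tot x2 * tot x3 * tot x4
     - sg (side e k.1 k.2) x1 * sg (side e k.1 k.2) x2 * sg (side e k.1 k.2) x3 * sg (side e k.1 k.2) x4
     - sg (~: side e k.1 k.2) x1 * sg (~: side e k.1 k.2) x2 * sg (~: side e k.1 k.2) x3 * sg (~: side e k.1 k.2) x4).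
Proof.
rewrite /steiner_form.
under eq_bigr => i1 _ do under eq_bigr => i2 _ do under eq_bigr => i3 _ do under eq_bigr => i4 _ do
  rewrite (steiner_cnt tr i1) cnt_sum !big_distrl /=.
under eq_bigr => i1 _ do under eq_bigr => i2 _ do under eq_bigr => i3 _ do rewrite exchange_big /=.
under eq_bigr => i1 _ do under eq_bigr => i2 _ do rewrite exchange_big /=.
under eq_bigr => i1 _ do rewrite exchange_big /=.
rewrite exchange_big /=; apply: eq_bigr => k _.
under eq_bigr => i1 _ do under eq_bigr => i2 _ do under eq_bigr => i3 _ do under eq_bigr => i4 _ do
  rewrite sep_ind alg8.
under eq_bigr => i1 _ do under eq_bigr => i2 _ do under eq_bigr => i3 _ do rewrite !sumrB.
under eq_bigr => i1 _ do under eq_bigr => i2 _ do rewrite !sumrB.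
under eq_bigr => i1 _ do rewrite !sumrB.
rewrite !sumrB !fact4 !sum_ind.
by [].
Qed.
End Form.

Section Alg.
Variable R : realFieldType.

Definition Gv (s a t : R) :=
  2 * s ^+ 4 * (4 * t ^+ 3 * (1 - t) + 6 * t ^+ 2 * (1 - t) ^+ 2 + 4 * t * (1 - t) ^+ 3)
  + 4 * (a - s * t) ^+ 4.

Lemma edge_val (s a t : R) :
  (s * s * s * s - a * a * a * (2 * s * t - a) - (s - a) * (s - a) * (s - a) * (s - (2 * s * t - a)))
  + (s * s * s * s - a * (2 * s * t - a) * (2 * s * t - a) * (2 * s * t - a)
     - (s - a) * (s - (2 * s * t - a)) * (s - (2 * s * t - a)) * (s - (2 * s * t - a)))
  = Gv s a t.
Proof. rewrite /Gv; ring. Qed.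

Lemma P_ge0 (t : R) : 0 <= t <= 1 ->
  0 <= 4 * t ^+ 3 * (1 - t) + 6 * t ^+ 2 * (1 - t) ^+ 2 + 4 * t * (1 - t) ^+ 3.
Proof.
case/andP => t0 t1; have u0 : 0 <= 1 - t by rewrite subr_ge0.
by rewrite !addr_ge0 // !mulr_ge0 // ?exprn_ge0.
Qed.

Lemma P_gt0 (t : R) : 0 < t < 1 ->
  0 < 4 * t ^+ 3 * (1 - t) + 6 * t ^+ 2 * (1 - t) ^+ 2 + 4 * t * (1 - t) ^+ 3.
Proof.
case/andP => t0 t1; have u0 : 0 < 1 - t by rewrite subr_gt0.
rewrite -addrA ltr_pwDl //; first by rewrite !mulr_gt0 // ?exprn_gt0.
by rewrite addr_ge0 // !mulr_ge0 // ?exprn_ge0 // ltW.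
Qed.

Lemma Gv_ge0 s a t : 0 <= t <= 1 -> 0 <= Gv s a t.
Proof.
move=> ht; rewrite /Gv; apply: addr_ge0; last by rewrite mulr_ge0 // exprn_even_ge0.
by apply: mulr_ge0; [rewrite mulr_ge0 // exprn_even_ge0 | exact: P_ge0].
Qed.

Lemma Gv_gt0 s a t : 0 <= t <= 1 -> (s != 0) && (0 < t < 1) || (a - s * t != 0) ->
  0 < Gv s a t.
Proof.
move=> ht /orP[/andP[s0 ht']|ne]; rewrite /Gv.
  apply: ltr_wpDr; first by rewrite mulr_ge0 // exprn_even_ge0.
  by apply: mulr_gt0; [rewrite mulr_gt0 // exprn_even_gt0 // s0 orbT | exact: P_gt0].
apply: ltr_wpDl; last by rewrite mulr_gt0 // exprn_even_gt0 // ne orbT.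
by apply: mulr_ge0; [rewrite mulr_ge0 // exprn_even_ge0 | exact: P_ge0].
Qed.
End Alg.

Section Main.
Variable R : realFieldType.
Variable n : nat.
Variable e : rel 'I_n.
Hypothesis tr : is_tree e.
Hypothesis hn : (3 <= n)%N.

Lemma Nnz : (n%:R : R) != 0.
Proof. by rewrite pnatr_eq0 -lt0n (leq_trans _ hn). Qed.

Lemma Av_entry (v : 'cV[R]_n) i : (matA R n *m v) i 0 = 2 / n%:R * tot v - v i 0.
Proof.
rewrite /matA mulmxBl mul1mx -scalemxAl !mxE /tot; congr (_ * _ - _).
by apply: eq_bigr => j _; rewrite mxE mul1r.
Qed.

Lemma tot_Av (v : 'cV[R]_n) : tot (matA R n *m v) = tot v.
Proof.
rewrite {1}/tot; under eq_bigr do rewrite Av_entry.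
rewrite sumrB sumr_const card_ord -/(tot v).
rewrite -mulr_natr; field; exact: Nnz.
Qed.

Lemma sg_Av (L : {set 'I_n}) (v : 'cV[R]_n) :
  sg L (matA R n *m v) = #|L|%:R * (2 / n%:R * tot v) - sg L v.
Proof.
rewrite {1}/sg; under eq_bigr do rewrite Av_entry.
by rewrite sumrB sumr_const (mulr_natl (2 / n%:R * tot v) #|L|).
Qed.

Lemma sgC (L : {set 'I_n}) (x : 'cV[R]_n) : sg (~: L) x = tot x - sg L x.
Proof.
rewrite /tot (bigID (mem L)) /= addrC addrK /sg.
by apply: eq_bigl => i; rewrite in_setC.
Qed.

Lemma total_eq (v : 'cV[R]_n) : C1 e v v v v + C3 e v v v v =
  \sum_(k | edgeb e k) Gv (tot v) (sg (side e k.1 k.2) v) (#|side e k.1 k.2|%:R / n%:R).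
Proof.
rewrite /C1 /C3 !(form_edges tr) -big_split; apply: eq_bigr => k _.
rewrite /= !sgC !tot_Av !sg_Av -edge_val; ring.
Qed.

Lemma t_bounds k : edgeb e k ->
  0 < #|side e k.1 k.2|%:R / (n%:R : R) < 1.
Proof.
case: k => x y /andP[_ /= exy].
have p0 : (0 < #|side e x y|)%N by apply/card_gt0P; exists x; exact: side_x.
have pn : (#|side e x y| < n)%N.
  rewrite -[X in (_ < X)%N]card_ord -cardsT; apply: proper_card; rewrite properT.
  by apply/eqP => h; move: (bridge tr exy); rewrite h inE.
have N0 : 0 < (n%:R : R) by rewrite ltr0n (leq_trans _ hn).
apply/andP; split; first by rewrite divr_gt0 // ltr0n.
by rewrite ltr_pdivrMr // mul1r ltr_nat.
Qed.

Lemma t_bounds' k : edgeb e k ->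
  0 <= #|side e k.1 k.2|%:R / (n%:R : R) <= 1.
Proof. by move/t_bounds => /andP[h1 h2]; rewrite ltW // ltW. Qed.

Lemma part_sum (v : 'cV[R]_n) z :
  tot v = v z 0 + \sum_(y | e z y) sg (side e y z) v.
Proof.
have cnt1 i : \sum_(y | e z y) ((i \in side e y z)%:R : R) = (i != z)%:R.
  case: (eqVneq i z) => [->|iz] /=.
    apply: big1 => y ezy; rewrite (negPf (bridge tr _)) //.
    by rewrite (e_sym tr).
  have [y0 /andP[ezy0 iy0]] := side_cover tr iz.
  rewrite (bigD1 y0) //= iy0 big1 ?addr0 // => y /andP[ezy yy0].
  case: (boolP (i \in side e y z)) => // iy; exfalso.
  by apply: (side_disj tr ezy ezy0 yy0 iy iy0).
have -> : \sum_(y | e z y) sg (side e y z) v = \sum_i (i != z)%:R * v i 0.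
  under eq_bigr => y _ do rewrite -sum_ind.
  rewrite exchange_big /=; apply: eq_bigr => i _.
  by rewrite -big_distrl /= cnt1.
rewrite /tot (bigD1 z) //= [in RHS](bigD1 z) //= eqxx mul0r add0r; congr (_ + _).
by apply: eq_bigr => i iz; rewrite iz mul1r.
Qed.

Lemma side_sg0 (v : 'cV[R]_n) : tot v = 0 ->
  (forall k, edgeb e k -> sg (side e k.1 k.2) v = 0) ->
  forall y z, e y z -> sg (side e y z) v = 0.
Proof.
move=> t0 h y z eyz; have [[a b] ek pk] := edge_of tr eyz.
have := set2_mem (esym pk); have := set2_memr (esym pk).
move: (ek) => /andP[/= lt _].
move=> /orP[]/eqP hb /orP[]/eqP ha; subst a b.
- by move: lt; rewrite ltnn.
- have ezy : e z y by rewrite (e_sym tr).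
  by rewrite (side_compl tr ezy) sgC t0 (h _ ek) subrr.
- by rewrite (h _ ek).
- by move: lt; rewrite ltnn.
Qed.

Lemma sep_nonzero (v : 'cV[R]_n) : tot v = 0 -> v != 0 ->
  exists k, edgeb e k && (sg (side e k.1 k.2) v != 0).
Proof.
move=> t0 v0; case: (boolP [exists k, edgeb e k && (sg (side e k.1 k.2) v != 0)]).
  by move/existsP.
rewrite negb_exists => /forallP hk; exfalso; move/eqP: v0; apply.
have h k : edgeb e k -> sg (side e k.1 k.2) v = 0.
  by move=> ek; move: (hk k); rewrite ek /= negbK => /eqP.
apply/matrixP => i j; rewrite ord1 mxE.
have := part_sum v i; rewrite t0 big1 ?addr0 => [<- //|y eiy].
by apply: side_sg0 => //; rewrite (e_sym tr).
Qed.
End Main.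

Unset Implicit Arguments.
Theorem mainTheorem14 (R : realFieldType) (n : nat) (e : rel 'I_n) :
  (3 <= n)%N -> is_tree e ->
  forall v : 'cV[R]_n, v != 0 -> 0 < C1 e v v v v + C3 e v v v v.
Proof.
move=> hn tr v v0; rewrite (total_eq tr hn).
have rest k : 0 <= \sum_(i | edgeb e i && (i != k))
    Gv (tot v) (sg (side e i.1 i.2) v) (#|side e i.1 i.2|%:R / n%:R).
  apply: sumr_ge0 => i /andP[ei _]; apply: Gv_ge0. exact: (t_bounds' R tr hn ei).
case: (eqVneq (tot v) 0) => s0.
  have [k /andP[ek a0]] := sep_nonzero tr s0 v0.
  rewrite (bigD1 k) //=; apply: ltr_wpDr; first exact: rest.
  apply: Gv_gt0; first exact: (t_bounds' R tr hn ek).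
  by rewrite s0 mul0r subr0 a0 orbT.
have n0 : (0 < n)%N by apply: leq_trans hn.
have n1 : (1 < n)%N by apply: leq_trans hn.
have wz : Ordinal n1 != Ordinal n0 by rewrite -val_eqE.
have [y /andP[ezy _]] := side_cover tr wz.
have [k ek _] := edge_of tr ezy.
rewrite (bigD1 k) //=; apply: ltr_wpDr; first exact: rest.
apply: Gv_gt0; first exact: (t_bounds' R tr hn ek).
by rewrite s0 (t_bounds R tr hn ek).
Qed.
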